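(* (Provably in $\mathsf{Z}^-_{\mathrm{FTM}\omega}$.) For any set $X$, the finite closure $\mathrm{PC}(X)$ and the transitive closure $\mathrm{TC}(X)$ exist as sets.
   Context: $\mathsf{Z}^-_{\mathrm{FTM}\omega}$ is Zermelo set theory without Power Set and Choice (Extensionality, Pairing, Union, Infinity, Regularity, Separation) plus: (FC) every set $X$ has a superset $Y$ such that every finite $x\subseteq Y$ belongs to $Y$; (TS) every set has a transitive superset; (MC) every set binary relation $A$ that is well-founded and extensional admits a transitive set $X$ and a bijection $\eta$ from its field onto $X$ with $jAk\iff\eta(j)\in\eta(k)$; (Count) every set admits an injection into $\omega$. A set $Y$ is finite-subset closed if every finite $x\subseteq Y$ belongs to $Y$. $\mathrm{PC}(X)$ is the $\subseteq$-least finite-subset closed superset of $X$, and $\mathrm{TC}(X)$ is the $\subseteq$-least transitive superset of $X$. *)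

(* Defs.v *)
(* Models of the first-order theory Z^-_{FTM omega} in the
   language {∈}: a carrier M with a membership relation mem; equality is
   Leibniz equality on M.  "Provable in T" is rendered (via completeness)
   as "true in every model of T".  The Separation schema is stated for all
   first-order formulas (deeply embedded, de Bruijn indices, with parameters). *)

Set Implicit Arguments.

Section ZSets.
Variable M : Type.
Variable mem : M -> M -> Prop.

Inductive form : Type :=
| FIn  : nat -> nat -> form
| FEq  : nat -> nat -> form
| FBot : form
| FImp : form -> form -> form
| FAnd : form -> form -> form
| FOr  : form -> form -> form
| FAll : form -> form
| FEx  : form -> form.

Definition scons (x : M) (e : nat -> M) : nat -> M :=
  fun n => match n with 0 => x | S k => e k end.

Fixpoint sat (e : nat -> M) (f : form) : Prop :=
  match f with
  | FIn i j => mem (e i) (e j)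
  | FEq i j => e i = e j
  | FBot => False
  | FImp a b => sat e a -> sat e b
  | FAnd a b => sat e a /\ sat e b
  | FOr a b => sat e a \/ sat e b
  | FAll a => forall x, sat (scons x e) a
  | FEx a => exists x, sat (scons x e) a
  end.

Definition subset (a b : M) : Prop := forall x, mem x a -> mem x b.
Definition is_empty (a : M) : Prop := forall x, ~ mem x a.
Definition transitive (a : M) : Prop := forall x y, mem y x -> mem x a -> mem y a.
Definition is_upair (p x y : M) : Prop := forall z, mem z p <-> (z = x \/ z = y).
Definition is_pair (p x y : M) : Prop :=
  forall z, mem z p <-> (is_upair z x x \/ is_upair z x y).
Definition is_succ (s x : M) : Prop := forall z, mem z s <-> (mem z x \/ z = x).
Definition inductive (a : M) : Prop :=
  (exists e, is_empty e /\ mem e a) /\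
  (forall x, mem x a -> exists s, is_succ s x /\ mem s a).
Definition is_omega (w : M) : Prop :=
  inductive w /\ forall I, inductive I -> subset w I.

Definition rel (f a b : M) : Prop := exists p, mem p f /\ is_pair p a b.

Definition is_fun_on (f : M) (D B : M -> Prop) : Prop :=
  (forall p, mem p f -> exists a b, is_pair p a b /\ D a /\ B b) /\
  (forall a, D a -> exists b, rel f a b) /\
  (forall a b b', rel f a b -> rel f a b' -> b = b').
Definition injective_fun (f : M) : Prop :=
  forall a a' b, rel f a b -> rel f a' b -> a = a'.
Definition bijection_on (f : M) (D B : M -> Prop) : Prop :=
  is_fun_on f D B /\ injective_fun f /\ (forall b, B b -> exists a, D a /\ rel f a b).

Definition finite (x : M) : Prop :=
  exists w n f, is_omega w /\ mem n w /\ bijection_on f (fun a => mem a x) (fun b => mem b n).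

Definition fs_closed (Y : M) : Prop :=
  forall x, subset x Y -> finite x -> mem x Y.

Definition is_relation (A : M) : Prop := forall p, mem p A -> exists a b, is_pair p a b.
Definition field (A : M) (j : M) : Prop := exists k, rel A j k \/ rel A k j.
Definition well_founded_rel (A : M) : Prop :=
  forall s, (exists x, mem x s) -> (forall x, mem x s -> field A x) ->
    exists m, mem m s /\ forall y, mem y s -> ~ rel A y m.
Definition extensional_rel (A : M) : Prop :=
  forall j k, field A j -> field A k -> (forall i, rel A i j <-> rel A i k) -> j = k.

Record ZFTMw : Prop := {
  ax_ext : forall a b, (forall z, mem z a <-> mem z b) -> a = b;
  ax_pair : forall x y, exists p, is_upair p x y;
  ax_union : forall a, exists u, forall z, mem z u <-> exists y, mem y a /\ mem z y;
  ax_inf : exists I, inductive I;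
  ax_reg : forall a, (exists x, mem x a) -> exists y, mem y a /\ forall z, mem z y -> ~ mem z a;
  ax_sep : forall (phi : form) (e : nat -> M) (a : M),
      exists b, forall x, mem x b <-> (mem x a /\ sat (scons x e) phi);
  ax_FC : forall X, exists Y, subset X Y /\ fs_closed Y;
  ax_TS : forall X, exists Y, subset X Y /\ transitive Y;
  ax_MC : forall A, is_relation A -> well_founded_rel A -> extensional_rel A ->
      exists X eta, transitive X /\ bijection_on eta (field A) (fun b => mem b X) /\
        forall j k a b, field A j -> field A k -> rel eta j a -> rel eta k b ->
          (rel A j k <-> mem a b);
  ax_Count : forall X, exists w f, is_omega w /\
      is_fun_on f (fun a => mem a X) (fun b => mem b w) /\ injective_fun f
}.

Definition is_PC (X P : M) : Prop :=
  subset X P /\ fs_closed P /\ forall Y, subset X Y -> fs_closed Y -> subset P Y.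
Definition is_TC (X T : M) : Prop :=
  subset X T /\ transitive T /\ forall Y, subset X Y -> transitive Y -> subset T Y.

End ZSets.

(* Main.v *)
Require Import Defs.

Definition FIff (a b : form) : form := FAnd (FImp a b) (FImp b a).

Definition f_upair p x y := FAll (FAnd (FImp (FIn 0 (S p)) (FOr (FEq 0 (S x)) (FEq 0 (S y))))
                                      (FImp (FOr (FEq 0 (S x)) (FEq 0 (S y))) (FIn 0 (S p)))).
Definition f_pair p x y := FAll (FIff (FIn 0 (S p)) (FOr (f_upair 0 (S x) (S x)) (f_upair 0 (S x) (S y)))).
Definition f_rel f a b := FEx (FAnd (FIn 0 (S f)) (f_pair 0 (S a) (S b))).
Definition f_empty a := FAll (FImp (FIn 0 (S a)) FBot).
Definition f_succ s x := FAll (FIff (FIn 0 (S s)) (FOr (FIn 0 (S x)) (FEq 0 (S x)))).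
Definition f_inductive a := FAnd (FEx (FAnd (f_empty 0) (FIn 0 (S a))))
  (FAll (FImp (FIn 0 (S a)) (FEx (FAnd (f_succ 0 1) (FIn 0 (S (S a))))))).
Definition f_subset a b := FAll (FImp (FIn 0 (S a)) (FIn 0 (S b))).
Definition f_omega w := FAnd (f_inductive w) (FAll (FImp (f_inductive 0) (f_subset (S w) 0))).
Definition f_funon f x n :=
  FAnd (FAll (FImp (FIn 0 (S f)) (FEx (FEx (FAnd (f_pair 2 1 0)
          (FAnd (FIn 1 (S (S (S x)))) (FIn 0 (S (S (S n))))))))))
  (FAnd (FAll (FImp (FIn 0 (S x)) (FEx (f_rel (S (S f)) 1 0))))
        (FAll (FAll (FAll (FImp (f_rel (3+f) 2 1) (FImp (f_rel (3+f) 2 0) (FEq 1 0))))))).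
Definition f_inj f := FAll (FAll (FAll (FImp (f_rel (3+f) 2 0) (FImp (f_rel (3+f) 1 0) (FEq 2 1))))).
Definition f_bij f x n := FAnd (f_funon f x n) (FAnd (f_inj f)
  (FAll (FImp (FIn 0 (S n)) (FEx (FAnd (FIn 0 (S (S x))) (f_rel (S (S f)) 0 1)))))).
Definition f_finite x := FEx (FEx (FEx (FAnd (f_omega 2) (FAnd (FIn 1 2) (f_bij 0 (3+x) 1))))).
Definition f_fsclosed Y := FAll (FImp (f_subset 0 (S Y)) (FImp (f_finite 0) (FIn 0 (S Y)))).
Definition f_transitive a := FAll (FAll (FImp (FIn 0 1) (FImp (FIn 1 (S (S a))) (FIn 0 (S (S a)))))).

Lemma sat_fsclosed (M : Type) (mem : M -> M -> Prop) e i :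
  sat mem e (f_fsclosed i) <-> fs_closed mem (e i).
Proof. apply iff_refl. Qed.

Lemma sat_subset (M : Type) (mem : M -> M -> Prop) e i j :
  sat mem e (f_subset i j) <-> subset mem (e i) (e j).
Proof. apply iff_refl. Qed.

Lemma sat_trans (M : Type) (mem : M -> M -> Prop) e i :
  sat mem e (f_transitive i) <-> transitive mem (e i).
Proof. apply iff_refl. Qed.

Theorem lemma9p1 (M : Type) (mem : M -> M -> Prop) (HT : ZFTMw mem) :
  forall X : M, (exists P, is_PC mem X P) /\ (exists T, is_TC mem X T).
Proof.
  intro X. split.
  - destruct (ax_FC HT X) as [Y [HXY HY]].
    destruct (ax_sep HT (FAll (FImp (f_subset 2 0) (FImp (f_fsclosed 0) (FIn 1 0))))
                (fun _ => X) Y) as [P HP].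
    exists P. cbn in HP.
    assert (HP' : forall x, mem x P <-> mem x Y /\
              (forall Z, subset mem X Z -> fs_closed mem Z -> mem x Z)) by exact HP.
    clear HP.
    split; [|split].
    + intros x Hx. apply HP'. split; auto.
    + intros x Hsub Hfin. apply HP'. split.
      * apply HY; auto. intros z Hz. apply (proj1 (proj1 (HP' z) (Hsub z Hz))).
      * intros Z HXZ HZ. apply HZ; auto. intros z Hz.
        apply (proj2 (proj1 (HP' z) (Hsub z Hz))); auto.
    + intros Z HXZ HZ x Hx. apply (proj2 (proj1 (HP' x) Hx)); auto.
  - destruct (ax_TS HT X) as [Y [HXY HY]].
    destruct (ax_sep HT (FAll (FImp (f_subset 2 0) (FImp (f_transitive 0) (FIn 1 0))))
                (fun _ => X) Y) as [T HP].
    exists T. cbn in HP.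
    assert (HP' : forall x, mem x T <-> mem x Y /\
              (forall Z, subset mem X Z -> transitive mem Z -> mem x Z)) by exact HP.
    clear HP.
    split; [|split].
    + intros x Hx. apply HP'. split; auto.
    + intros x y Hy Hx. apply HP'. destruct (proj1 (HP' x) Hx) as [H1 H2]. split.
      * apply (HY x y); auto.
      * intros Z HXZ HZ. apply (HZ x y); auto.
    + intros Z HXZ HZ x Hx. apply (proj2 (proj1 (HP' x) Hx)); auto.
Qed.
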